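(* Let $G$ be a locally compact group, $p\in(1,\infty)$ and $(\pi,E)\in\mathrm{Rep}_p(G)$. Then $A_{p,\pi}=A_{p,\pi^\infty}$ (as normed spaces of functions on $G$).
   Context: A representation $(\pi,E)$ of $G$ is a strongly continuous homomorphism from $G$ into the invertible isometries of a Banach space $E$. A $QSL_p$-space is a Banach space isometric to a quotient of a closed subspace of an $L_p$-space; $\mathrm{Rep}_p(G)$ is the class of representations on $QSL_p$-spaces. $L_p(E)$ is the space of sequences $(\xi_n)_n$ in $E$ with $(\sum_n\|\xi_n\|^p)^{1/p}<\infty$ (its dual is $L_{p'}(E^* )$, $1/p+1/p'=1$), and $\pi^\infty(x)(\xi_n)_n=(\pi(x)\xi_n)_n$. For a representation $(\rho,F)$, $A_{p,\rho}$ is the space of functions $u(x)=\sum_n\langle\rho(x)\xi_n,\eta_n\rangle$ with $\xi_n\in F$, $\eta_n\in F^*$, $\sum_n\|\xi_n\|\|\eta_n\|<\infty$, with norm the infimum of $\sum_n\|\xi_n\|\|\eta_n\|$ over all such expressions. *)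

(* Defs.v *)
From HB Require Import structures.
From mathcomp Require Import all_boot all_order all_algebra.
From mathcomp Require Import all_classical all_reals all_analysis.
From mathcomp Require Import complex.
Set Implicit Arguments. Unset Strict Implicit. Unset Printing Implicit Defensive.
Import Order.TTheory GRing.Theory Num.Theory.
Import numFieldNormedType.Exports.
Local Open Scope classical_set_scope.
Local Open Scope ring_scope.

(* real-valued norm: on a normed space over R[i] the library norm `|v| is an
   element of R[i] with zero imaginary part; we take its real part. *)
Definition nrm (R : realType) (V : normedZmodType R[i]) (v : V) : R :=
  complex.Re `|v|.

Definition lc_group (G : topologicalType) (mul : G -> G -> G) (inv : G -> G)
    (one : G) : Prop :=
  [/\ associative mul, left_id one mul & left_inverse one inv mul] /\
  [/\ continuous (fun xy : G * G => mul xy.1 xy.2), continuous inv,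
      hausdorff_space G & locally_compact [set: G]].

Definition isom_rep (R : realType) (G : topologicalType) (mul : G -> G -> G)
    (E : normedModType R[i]) (pi : G -> E -> E) : Prop :=
  [/\ forall x (a : R[i]) (u v : E), pi x (a *: u + v) = a *: pi x u + pi x v,
      forall x v, `|pi x v| = `|v|,
      forall x, bijective (pi x),
      forall x y v, pi (mul x y) v = pi x (pi y v)
    & forall v, continuous (fun x : G => pi x v)].

Section Lp.
Context (R : realType) (d : measure_display) (T : measurableType d)
  (mu : {measure set T -> \bar R}).

Definition cmeasurable (f : T -> R[i]) : Prop :=
  measurable_fun setT (fun t => complex.Re (f t)) /\
  measurable_fun setT (fun t => complex.Im (f t)).

Definition Lpnorm (p : R) (f : T -> R[i]) : \bar R :=
  ((\int[mu]_t ((nrm (f t)) `^ p)%:E) `^ p^-1)%E.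

Definition Lp (p : R) : set (T -> R[i]) :=
  [set f | cmeasurable f /\ (\int[mu]_t ((nrm (f t)) `^ p)%:E < +oo)%E].
End Lp.

(* E is a QSL_p-space: there are a measure space (T, mu), a closed linear
   subspace F of L_p(mu) and a linear surjection q : F -> E which is a quotient
   map, i.e. ||e|| = inf { ||f||_p : f in F, q f = e } for all e; equivalently
   q induces an isometric isomorphism F / ker q ~= E. *)
Definition QSLp (R : realType) (p : R) (E : normedModType R[i]) : Prop :=
  exists (d : measure_display) (T : measurableType d)
         (mu : {measure set T -> \bar R})
         (F : set (T -> R[i])) (q : (T -> R[i]) -> E),
  [/\ F `<=` Lp mu p,
      F (fun=> 0),
      forall (a : R[i]) f g, F f -> F g -> F (fun t => a * f t + g t)
    & forall (f : T -> R[i]) (fn : nat -> T -> R[i]),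
        (forall n, F (fn n)) -> Lp mu p f ->
        (fun n => Lpnorm mu p (fun t => fn n t - f t)) @ \oo --> 0%E ->
        F f] /\
  [/\ forall (a : R[i]) f g, F f -> F g ->
        q (fun t => a * f t + g t) = a *: q f + q g
    & forall e : E,
        ereal_inf [set Lpnorm mu p f | f in [set f | F f /\ q f = e]]
        = (nrm e)%:E].

Definition dual_elem (R : realType) (E : normedModType R[i]) (eta : E -> R[i])
  : Prop :=
  (forall (a : R[i]) (u v : E), eta (a *: u + v) = a * eta u + eta v) /\
  exists C : R, forall v, nrm (eta v) <= C * nrm v.

Definition dnrm (R : realType) (E : normedModType R[i]) (eta : E -> R[i]) : R :=
  sup [set nrm (eta v) | v in [set v : E | nrm v <= 1]].

(* ---------- the spaces A_{p,rho}, generic form ----------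
   Given the "vectors" X (with membership predicate and norm), the "dual
   vectors" Y (idem) and the coefficient pairing (x, xi, eta) |-> <rho(x)xi, eta>,
   u is in A iff u(x) = sum_n <rho(x) xi_n, eta_n> (pointwise convergent
   series) with sum_n ||xi_n|| ||eta_n|| < oo; the norm is the infimum. *)
Section Agen.
Context (R : realType) (G X Y : Type) (inX : X -> Prop) (inY : Y -> Prop)
  (nX : X -> R) (nY : Y -> R) (pair : G -> X -> Y -> R[i]).

Definition Arepr (u : G -> R[i]) (xi : nat -> X) (eta : nat -> Y) : Prop :=
  [/\ forall n, inX (xi n), forall n, inY (eta n),
      (\sum_(0 <= n <oo) (nX (xi n) * nY (eta n))%:E < +oo)%E
    & forall x, series (fun n => pair x (xi n) (eta n)) @ \oo -->
                (u x : (R[i] : numFieldType))].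

Definition Aspace : set (G -> R[i]) :=
  [set u | exists xi eta, Arepr u xi eta].

Definition Anorm (u : G -> R[i]) : \bar R :=
  ereal_inf [set s : \bar R | exists xi eta, Arepr u xi eta /\
     s = (\sum_(0 <= n <oo) (nX (xi n) * nY (eta n))%:E)%E].
End Agen.

Section Api.
Context (R : realType) (G : Type) (E : normedModType R[i]) (pi : G -> E -> E).

Definition A_pi := Aspace (fun _ : E => True) (@dual_elem R E)
  (@nrm R E) (@dnrm R E) (fun x xi (eta : E -> R[i]) => eta (pi x xi)).
Definition Anorm_pi := Anorm (fun _ : E => True) (@dual_elem R E)
  (@nrm R E) (@dnrm R E) (fun x xi (eta : E -> R[i]) => eta (pi x xi)).
End Api.

Section Linf.
Context (R : realType) (G : Type) (E : normedModType R[i]) (pi : G -> E -> E).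

Definition conj_exp (p : R) : R := (1 - p^-1)^-1.

Definition lpnorm (p : R) (a : nat -> R) : \bar R :=
  ((\sum_(0 <= k <oo) ((a k) `^ p)%:E) `^ p^-1)%E.

Definition LpE (p : R) (xi : nat -> E) : Prop :=
  (\sum_(0 <= k <oo) ((nrm (xi k)) `^ p)%:E < +oo)%E.
Definition LpE_norm (p : R) (xi : nat -> E) : R :=
  fine (lpnorm p (fun k => nrm (xi k))).

Definition LpEdual (p' : R) (eta : nat -> E -> R[i]) : Prop :=
  (forall k, dual_elem (eta k)) /\
  (\sum_(0 <= k <oo) ((dnrm (eta k)) `^ p')%:E < +oo)%E.
Definition LpEdual_norm (p' : R) (eta : nat -> E -> R[i]) : R :=
  fine (lpnorm p' (fun k => dnrm (eta k))).

(* <pi^\infty(x) xi, eta> = sum_k <pi(x) xi_k, eta_k> *)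
Definition pair_inf (x : G) (xi : nat -> E) (eta : nat -> E -> R[i]) : R[i] :=
  limn (series (fun k => eta k (pi x (xi k))) : nat -> (R[i] : numFieldType)).

Definition A_pi_inf (p : R) :=
  Aspace (LpE p) (LpEdual (conj_exp p)) (LpE_norm p)
    (LpEdual_norm (conj_exp p)) pair_inf.
Definition Anorm_pi_inf (p : R) :=
  Anorm (LpE p) (LpEdual (conj_exp p)) (LpE_norm p)
    (LpEdual_norm (conj_exp p)) pair_inf.
End Linf.

(* Main.v *)
Require Import Defs.
From HB Require Import structures.
From mathcomp Require Import all_boot all_order all_algebra.
From mathcomp Require Import all_classical all_reals all_analysis.
From mathcomp Require Import complex.
From mathcomp Require Import lra.
Import Order.TTheory GRing.Theory Num.Theory.
Import numFieldNormedType.Exports.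
Local Open Scope classical_set_scope.
Local Open Scope ring_scope.

Section cplx.
Variable R : realType.
Local Open Scope complex_scope.

Lemma normC_real (x : R) : `|x%:C| = (`|x|)%:C.
Proof. by rewrite normc_def /= expr0n addr0 sqrtr_sqr. Qed.

Lemma Re_le_norm (z : R[i]) : `|complex.Re z| <= complex.Re `|z|.
Proof.
rewrite normc_def /= -sqrtr_sqr ler_sqrt ?lerDl ?sqr_ge0 ?addr_ge0 ?sqr_ge0//.
Qed.

Lemma Im_le_norm (z : R[i]) : `|complex.Im z| <= complex.Re `|z|.
Proof.
rewrite normc_def /= -sqrtr_sqr ler_sqrt ?lerDr ?sqr_ge0 ?addr_ge0 ?sqr_ge0//.
Qed.

Lemma cvgC (u : nat -> R) (l : R) : u @ \oo --> l ->
  (fun n => (u n)%:C : (R[i] : numFieldType)) @ \oo --> (l%:C : (R[i] : numFieldType)).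
Proof.
move=> /cvgrPdist_lt ul; apply/cvgrPdist_lt => e e0.
have := e0; rewrite ltcE /= => /andP[/eqP Ie Re0].
near=> n; have : `|l - u n| < complex.Re e by near: n; exact: ul.
rewrite -rmorphB normC_real ltcE /= => ->; by rewrite Ie eqxx.
Unshelve. all: by end_near. Qed.


Definition comb (x1 x2 x3 x4 : R) : R[i] := (x1 - x2)%:C + 'i * (x3 - x4)%:C.

Lemma comb_cvg (f1 f2 f3 f4 : nat -> R) (l1 l2 l3 l4 : R) :
  f1 @ \oo --> l1 -> f2 @ \oo --> l2 -> f3 @ \oo --> l3 -> f4 @ \oo --> l4 ->
  (fun N => comb (f1 N) (f2 N) (f3 N) (f4 N)) @ \oo -->
    (comb l1 l2 l3 l4 : (R[i] : numFieldType)).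
Proof.
move=> h1 h2 h3 h4; rewrite /comb.
have A : (fun N => (f1 N - f2 N)%:C) @ \oo --> ((l1 - l2)%:C : (R[i] : numFieldType)).
  by apply: cvgC; exact: (cvgB h1 h2).
have B : (fun N => (f3 N - f4 N)%:C) @ \oo --> ((l3 - l4)%:C : (R[i] : numFieldType)).
  by apply: cvgC; exact: (cvgB h3 h4).
have B' : (fun N => 'i * (f3 N - f4 N)%:C) @ \oo --> ('i * (l3 - l4)%:C : (R[i] : numFieldType)).
  exact: (@cvgM (R[i] : numFieldType) nat \oo _ (fun=> 'i) (fun N => (f3 N - f4 N)%:C) _ _ (cvg_cst _) B).
exact: (@cvgD _ (R[i] : numFieldType) _ _ _ (fun N => (f1 N - f2 N)%:C) (fun N => 'i * (f3 N - f4 N)%:C) _ _ A B').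
Qed.

Lemma series_comb (f1 f2 f3 f4 : nat -> R) :
  series (fun k => comb (f1 k) (f2 k) (f3 k) (f4 k)) =
  (fun N => comb (series f1 N) (series f2 N) (series f3 N) (series f4 N)).
Proof.
apply/funext => N; rewrite /series /= /comb big_split /= -mulr_sumr.
by rewrite -!rmorph_sum /= !sumrB.
Qed.

Definition pp (x : R) := (`|x| + x) / 2.
Definition nn (x : R) := (`|x| - x) / 2.

Lemma posneg (x : R) : pp x - nn x = x.
Proof. rewrite /pp /nn; lra. Qed.

Lemma pp_bnd (x : R) : 0 <= pp x <= `|x|.
Proof.
have h1 := ler_norm x; have h2 : - x <= `|x| by rewrite -normrN ler_norm.
rewrite /pp; apply/andP; split; lra.
Qed.

Lemma nn_bnd (x : R) : 0 <= nn x <= `|x|.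
Proof.
have h1 := ler_norm x; have h2 : - x <= `|x| by rewrite -normrN ler_norm.
rewrite /nn; apply/andP; split; lra.
Qed.

Local Open Scope ereal_scope.

Lemma nn_term_le (f : nat -> \bar R) n : (forall k, 0 <= f k) ->
  f n <= \sum_(k <oo) f k.
Proof.
move=> f0; apply: le_trans (nneseries_lim_ge n.+1 (fun k _ _ => f0 k)).
rewrite big_nat_recr//= leeDr// sume_ge0// => *; exact: f0.
Qed.

Lemma nn_real_series (u : nat -> R) : (forall k, (0 <= u k)%R) ->
  \sum_(k <oo) (u k)%:E < +oo ->
  cvgn (series u) /\ (limn (series u))%:E = \sum_(k <oo) (u k)%:E.
Proof.
move=> u0 uoo; have cu := nnseries_is_cvg u0 uoo; split => //.
rewrite -EFin_lim//; congr (limn _); apply/funext => n /=.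
by rewrite /series/= sumEFin.
Qed.

Lemma esum_reindex2 (g : nat -> nat -> \bar R) (e : nat -> nat * nat) :
  set_bij setT setT e -> (forall n k, 0 <= g n k) ->
  \sum_(m <oo) g (e m).1 (e m).2 = \sum_(n <oo) \sum_(k <oo) g n k.
Proof.
move=> be g0.
rewrite nneseries_esumT; last by move=> m; exact: g0.
rewrite nneseries_esumT; last by move=> n; apply: nneseries_ge0 => *; exact: g0.
rewrite -(reindex_esum setT setT e (fun x => g x.1 x.2))//.
have -> : [set: nat * nat] = [set: nat] `*`` (fun=> [set: nat]).
  by apply/seteqP; split => -[].
rewrite -esum_esum//; apply: eq_esum => n _.
by rewrite nneseries_esumT.
Qed.


Lemma nn_core (c : nat -> nat -> R) (e : nat -> nat * nat) :
  set_bij setT setT e -> (forall n k, (0 <= c n k)%R) ->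
  \sum_(n <oo) \sum_(k <oo) (c n k)%:E < +oo ->
  [/\ forall n, cvgn (series (c n)),
     cvgn (series (fun n => limn (series (c n)))),
     cvgn (series (fun m => c (e m).1 (e m).2)) &
     limn (series (fun n => limn (series (c n)))) =
     limn (series (fun m => c (e m).1 (e m).2))].
Proof.
move=> be c0 coo.
have inner n : \sum_(k <oo) (c n k)%:E < +oo.
  apply: le_lt_trans coo; apply: (nn_term_le (fun n => \sum_(k <oo) (c n k)%:E)).
  by move=> m; apply: nneseries_ge0 => *; rewrite lee_fin.
have hn n := @nn_real_series (c n) (c0 n) (inner n).
have s0 n : (0 <= limn (series (c n)))%R.
  by rewrite -lee_fin (proj2 (hn n)); apply: nneseries_ge0 => *; rewrite lee_fin.
have sE : \sum_(n <oo) (limn (series (c n)))%:E = \sum_(n <oo) \sum_(k <oo) (c n k)%:E.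
  by congr (limn _); apply/funext => N; apply: eq_bigr => n _; rewrite (proj2 (hn n)).
have [cs csE] : _ := @nn_real_series _ s0 (ltac:(by rewrite sE)).
have eE := @esum_reindex2 (fun n k => (c n k)%:E) e be (ltac:(by move=> n k; rewrite lee_fin)).
have e0 m : (0 <= c (e m).1 (e m).2)%R by [].
have [ce ceE] : _ := @nn_real_series _ e0 (ltac:(by rewrite eE)).
split => //; first by move=> n; case: (hn n).
by apply/EFin_inj; rewrite csE ceE sE eE.
Qed.



Local Notation CC := (R[i] : numFieldType).

Lemma c_core (a : nat -> nat -> R[i]) (b : nat -> nat -> R) (e : nat -> nat * nat) :
  set_bij setT setT e -> (forall n k, complex.Re `|a n k| <= b n k)%R ->
  \sum_(n <oo) \sum_(k <oo) (b n k)%:E < +oo ->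
  (forall n, cvgn (series (a n) : nat -> CC)) /\
  (forall l : R[i], series (fun n => limn (series (a n) : nat -> CC)) @ \oo --> (l : CC) ->
     series (fun m => a (e m).1 (e m).2) @ \oo --> (l : CC)).
Proof.
move=> be ab boo.
pose r1 n k := pp (complex.Re (a n k)).
pose r2 n k := nn (complex.Re (a n k)).
pose r3 n k := pp (complex.Im (a n k)).
pose r4 n k := nn (complex.Im (a n k)).
have aE n k : a n k = comb (r1 n k) (r2 n k) (r3 n k) (r4 n k).
  by rewrite /comb /r1 /r2 /r3 /r4 !posneg [LHS]complexE mulrC.
have bnd (f : R -> R) (sel : R[i] -> R) : (forall x, 0 <= f x <= `|x|)%R ->
    (forall z, `|sel z| <= complex.Re `|z|)%R ->
  (forall n k, 0 <= f (sel (a n k)))%R /\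
  \sum_(n <oo) \sum_(k <oo) (f (sel (a n k)))%:E < +oo.
  move=> fb sb; have f0 n k : (0 <= f (sel (a n k)))%R by case/andP: (fb (sel (a n k))).
  split => //; apply: le_lt_trans boo; apply: lee_nneseries.
    by move=> n _ _; apply: nneseries_ge0 => k _ _; rewrite lee_fin.
  move=> n _; apply: lee_nneseries; first by move=> k _ _; rewrite lee_fin.
  move=> k _; rewrite lee_fin; case/andP: (fb (sel (a n k))) => _ /le_trans; apply.
  exact: le_trans (sb _) (ab n k).
have [p1 s1] := bnd pp (@complex.Re R) pp_bnd Re_le_norm.
have [p2 s2] := bnd nn (@complex.Re R) nn_bnd Re_le_norm.
have [p3 s3] := bnd pp (@complex.Im R) pp_bnd Im_le_norm.
have [p4 s4] := bnd nn (@complex.Im R) nn_bnd Im_le_norm.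
have [c1 d1 e1 q1] := nn_core _ _ be p1 s1.
have [c2 d2 e2 q2] := nn_core _ _ be p2 s2.
have [c3 d3 e3 q3] := nn_core _ _ be p3 s3.
have [c4 d4 e4 q4] := nn_core _ _ be p4 s4.
have serE n : series (a n) = (fun N => comb (series (r1 n) N)
    (series (r2 n) N) (series (r3 n) N) (series (r4 n) N)).
  by rewrite -series_comb; congr series; apply/funext => k; exact: aE.
have limE n : limn (series (a n) : nat -> CC) = comb (limn (series (r1 n)))
    (limn (series (r2 n))) (limn (series (r3 n))) (limn (series (r4 n))).
  rewrite serE; apply: cvg_lim => //.
  exact: comb_cvg (c1 n) (c2 n) (c3 n) (c4 n).
split.
  move=> n; rewrite serE; apply: cvgP.
  exact: comb_cvg (c1 n) (c2 n) (c3 n) (c4 n).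
move=> l hl.
have H : series (fun n => limn (series (a n) : nat -> CC)) =
   series (fun n => comb (limn (series (r1 n)))
    (limn (series (r2 n))) (limn (series (r3 n))) (limn (series (r4 n)))).
  by congr series; apply/funext => n; exact: limE.
rewrite H series_comb in hl.
have hl' := @comb_cvg _ _ _ _ _ _ _ _ d1 d2 d3 d4.
have -> := cvg_unique (@norm_hausdorff CC CC) hl hl'.
have He : series (fun m => a (e m).1 (e m).2) =
  series (fun m => comb (r1 (e m).1 (e m).2) (r2 (e m).1 (e m).2)
     (r3 (e m).1 (e m).2) (r4 (e m).1 (e m).2)).
  by congr series; apply/funext => m; exact: aE.
rewrite He series_comb q1 q2 q3 q4.
exact: @comb_cvg _ _ _ _ _ _ _ _ e1 e2 e3 e4.
Qed.

End cplx.

Section dual.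
Variable R : realType.
Local Open Scope complex_scope.

Lemma nrmE {V : normedZmodType R[i]} (v : V) : `|v| = (nrm v)%:C.
Proof.
rewrite /nrm; move: (normr_ge0 v); case: `|v| => x y.
by rewrite lecE /= => /andP[/eqP -> _].
Qed.

Lemma nrm_ge0 {V : normedZmodType R[i]} (v : V) : 0 <= nrm v.
Proof. by have := normr_ge0 v; rewrite nrmE ler0c. Qed.

Lemma nrm0 (V : normedZmodType R[i]) : nrm (0 : V) = 0.
Proof. by rewrite /nrm normr0. Qed.

Lemma nrm0_eq {V : normedZmodType R[i]} (v : V) : nrm v = 0 -> v = 0.
Proof. by move=> h; apply: normr0_eq0; rewrite nrmE h. Qed.

Lemma nrmZ (E : normedModType R[i]) (a : R[i]) (v : E) : nrm (a *: v) = nrm a * nrm v.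
Proof. by rewrite [in LHS]/nrm normrZ (nrmE a) (nrmE v) -rmorphM. Qed.

Lemma nrmM (a b : R[i]) : nrm (a * b) = nrm a * nrm b.
Proof. by rewrite [in LHS]/nrm normrM (nrmE a) (nrmE b) -rmorphM. Qed.

Lemma nrmC (x : R) : nrm (x%:C) = `|x|.
Proof.
by rewrite /nrm normc_def /= expr0n addr0 sqrtr_sqr.
Qed.

Variable E : normedModType R[i].
Implicit Types (eta : E -> R[i]).

Lemma deta0 eta : dual_elem eta -> eta 0 = 0.
Proof.
move=> [lin _]; have := lin 1 0 0; rewrite scale1r addr0 mul1r.
by move=> h; apply: (addrI (eta 0)); rewrite addr0 -h.
Qed.

Lemma detaZ eta a u : dual_elem eta -> eta (a *: u) = a * eta u.
Proof.
move=> de; have := (proj1 de) a u 0; rewrite !addr0 (deta0 _ de) addr0 //.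
Qed.

Lemma dnrm_has_sup eta : dual_elem eta ->
  has_sup [set nrm (eta v) | v in [set v : E | nrm v <= 1]].
Proof.
move=> [lin [C hC]]; split; first by exists (nrm (eta 0)), 0 => //=; rewrite nrm0.
exists `|C| => _ [v /= v1 <-]; apply: le_trans (hC v) _.
apply: le_trans (ler_norm _) _; rewrite normrM (ger0_norm (nrm_ge0 _)).
by rewrite -[leRHS]mulr1 ler_wpM2l.
Qed.

Lemma dnrm_ub eta v : dual_elem eta -> nrm v <= 1 -> nrm (eta v) <= dnrm eta.
Proof. by move=> de v1; rewrite /dnrm; apply: (sup_upper_bound (dnrm_has_sup _ de)); exists v. Qed.

Lemma dnrm_ge0 eta : dual_elem eta -> 0 <= dnrm eta.
Proof.
move=> de; apply: le_trans (nrm_ge0 (eta 0)) (dnrm_ub _ _ de _); by rewrite nrm0.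
Qed.

Lemma deta_bound eta v : dual_elem eta -> nrm (eta v) <= dnrm eta * nrm v.
Proof.
move=> de; have [v0|vpos] := eqVneq (nrm v) 0.
  by rewrite v0 (nrm0_eq _ v0) (deta0 _ de) nrm0 mulr0.
have vp : 0 < nrm v by rewrite lt0r vpos nrm_ge0.
have := @dnrm_ub eta ((nrm v)^-1%:C *: v) de.
rewrite nrmZ nrmC (detaZ _ _ _ de) nrmM nrmC ger0_norm ?invr_ge0 ?nrm_ge0 //.
rewrite mulVf // lexx => /(_ isT); rewrite -(ler_pM2r vp) mulrAC mulVf ?mul1r //.
Qed.

Lemma dual0 : dual_elem (fun _ : E => 0 : R[i]).
Proof. split; first by move=> *; rewrite mulr0 addr0. by exists 0 => v; rewrite nrm0 mul0r. Qed.

Lemma dnrm0 : dnrm (fun _ : E => 0 : R[i]) = 0.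
Proof.
apply/le_anti/andP; split; last exact: dnrm_ge0 _ dual0.
apply: ge_sup; first by exists 0, 0 => //=; rewrite !nrm0.
by move=> _ [v _ <-]; rewrite nrm0.
Qed.

End dual.

Section hold.
Variable R : realType.

Lemma mfun_nat (f : nat -> R) : measurable_fun setT f.
Proof. by move=> _ Y _. Qed.

Lemma Lnorm_seq (p : R) (a : nat -> R) : 0 < p -> (forall k, 0 <= a k) ->
  Lnorm counting p%:E (EFin \o a) = lpnorm p a.
Proof.
move=> p0 a0; rewrite Lnorm_counting // /lpnorm; congr (_ `^ _)%E.
by congr (limn _); apply/funext => N; apply: eq_bigr => k _ /=;
   rewrite ger0_norm // poweR_EFin.
Qed.

Lemma holder_seq (p : R) (a b : nat -> R) : 1 < p ->
  (forall k, 0 <= a k) -> (forall k, 0 <= b k) ->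
  (\sum_(k <oo) (a k * b k)%:E <= lpnorm p a * lpnorm (conj_exp p) b)%E.
Proof.
move=> p1 a0 b0.
have p0 : 0 < p by apply: lt_trans p1.
have pi1 : p^-1 < 1 by rewrite invf_lt1.
have q0 : 0 < conj_exp p by rewrite /conj_exp invr_gt0 subr_gt0.
have pq : p^-1 + (conj_exp p)^-1 = 1 by rewrite /conj_exp invrK addrC subrK.
have := @hoelder _ _ R counting a b p (conj_exp p) (mfun_nat a) (mfun_nat b) p0 q0 pq.
rewrite !Lnorm_seq //; last by move=> k; rewrite /= mulr_ge0.
move=> H; apply: le_trans H.
rewrite /lpnorm invr1 poweRe1; last first.
  by apply: nneseries_ge0 => k _ _; rewrite lee_fin powR_ge0.
apply: lee_nneseries => [k _ _|k _]; first by rewrite lee_fin mulr_ge0.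
by rewrite /= powRr1 // mulr_ge0.
Qed.

End hold.

Section main.
Variables (R : realType) (G : Type) (E : normedModType R[i]) (pi : G -> E -> E) (p : R).
Hypothesis iso : forall x v, `|pi x v| = `|v|.
Hypothesis p1 : 1 < p.
Local Notation CC := (R[i] : numFieldType).

Local Notation AR1 := (Arepr (fun _ : E => True) (@dual_elem R E) (@nrm R E) (@dnrm R E)
   (fun (x : G) xi (eta : E -> R[i]) => eta (pi x xi))).
Local Notation AR2 := (Arepr (LpE p) (LpEdual (conj_exp p)) (LpE_norm p)
   (LpEdual_norm (conj_exp p)) (pair_inf pi)).

Definition xi1 (xi : nat -> E) n k : E := if k == 0%N then xi n else 0.
Definition eta1 (eta : nat -> E -> R[i]) n k : E -> R[i] :=
  if k == 0%N then eta n else (fun _ => 0).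

Lemma esum_first (f : nat -> \bar R) : (forall k, (0 < k)%N -> f k = 0) ->
  (\sum_(k <oo) f k = f 0%N)%E.
Proof.
move=> hf; apply: (lim_near_cst (@ereal_hausdorff R)).
exists 1%N => // -[|N] //= _; rewrite big_nat_recl // big1 ?adde0 // => k _.
exact: hf.
Qed.

Lemma series_first (u : nat -> CC) : (forall k, (0 < k)%N -> u k = 0) ->
  limn (series u) = u 0%N.
Proof.
move=> hf; apply: (lim_near_cst (@norm_hausdorff CC CC)).
exists 1%N => // -[|N] //= _; rewrite /series /= big_nat_recl // big1 ?addr0 // => k _.
exact: hf.
Qed.

Lemma lpsum_first (q : R) (f : nat -> R) : 0 < q -> (forall k, (0 < k)%N -> f k = 0) ->
  (\sum_(k <oo) ((f k) `^ q)%:E = ((f 0%N) `^ q)%:E)%E.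
Proof.
move=> q0 hf; apply: esum_first => k k0; by rewrite hf // powR0 // gt_eqF.
Qed.

Lemma lpnorm_first (q : R) (f : nat -> R) : 0 < q -> 0 <= f 0%N ->
  (forall k, (0 < k)%N -> f k = 0) -> lpnorm q f = (f 0%N)%:E.
Proof.
move=> q0 f0 hf; rewrite /lpnorm lpsum_first // poweR_EFin -powRrM mulfV ?gt_eqF //.
by rewrite powRr1.
Qed.

Lemma lpnorm_fin (q : R) (f : nat -> R) : (forall k, 0 <= f k) ->
  (\sum_(k <oo) ((f k) `^ q)%:E < +oo)%E -> lpnorm q f = (fine (lpnorm q f))%:E.
Proof.
move=> f0 h.
have s0 : (0 <= \sum_(k <oo) ((f k) `^ q)%:E)%E.
  by apply: nneseries_ge0 => k _ _; rewrite lee_fin powR_ge0.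
have fs : (\sum_(k <oo) ((f k) `^ q)%:E)%E \is a fin_num by rewrite ge0_fin_numE.
by rewrite /lpnorm -(fineK fs) poweR_EFin.
Qed.

Lemma mul_fin (x y : \bar R) : x = (fine x)%:E -> y = (fine y)%:E ->
  (x * y <= (fine x * fine y)%:E)%E.
Proof. by move=> hx hy; rewrite {1}hx {1}hy -EFinM. Qed.

Let p0 : 0 < p. Proof. by apply: lt_trans p1. Qed.
Let q0 : 0 < conj_exp p.
Proof. by rewrite /conj_exp invr_gt0 subr_gt0 invf_lt1. Qed.

Lemma embed u xi eta : AR1 u xi eta -> AR2 u (xi1 xi) (eta1 eta) /\
  (\sum_(n <oo) (LpE_norm p (xi1 xi n) * LpEdual_norm (conj_exp p) (eta1 eta n))%:E
   = \sum_(n <oo) (nrm (xi n) * dnrm (eta n))%:E)%E.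
Proof.
case=> _ inY soo cv.
have N1 n : LpE_norm p (xi1 xi n) = nrm (xi n).
  rewrite /LpE_norm /xi1 lpnorm_first //=; first exact: nrm_ge0.
  by case => // k _; rewrite nrm0.
have N2 n : LpEdual_norm (conj_exp p) (eta1 eta n) = dnrm (eta n).
  rewrite /LpEdual_norm /eta1 lpnorm_first //=; first exact: dnrm_ge0.
  by case => // k _; rewrite dnrm0.
have sumE : (\sum_(n <oo) (LpE_norm p (xi1 xi n) * LpEdual_norm (conj_exp p) (eta1 eta n))%:E
   = \sum_(n <oo) (nrm (xi n) * dnrm (eta n))%:E)%E.
  by apply: eq_eseriesr => n _; rewrite N1 N2.
split => //; split.
- move=> n; rewrite /LpE /xi1 lpsum_first //=; first exact: ltry.
  by case => // k _; rewrite nrm0.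
- move=> n; split; first by case => [|k] //=; [exact: inY | exact: dual0].
  rewrite /eta1 lpsum_first //=; first exact: ltry.
  by case => // k _; rewrite dnrm0.
- by rewrite sumE.
- move=> x; set f := series _.
  have -> : f = series (fun n => eta n (pi x (xi n))).
    rewrite /f; congr series; apply/funext => n.
    by rewrite /pair_inf series_first //= => -[|k].
  exact: cv x.
Qed.

Lemma flatten u XI ETA : AR2 u XI ETA -> exists xi eta, AR1 u xi eta /\
  (\sum_(m <oo) (nrm (xi m) * dnrm (eta m))%:E <=
   \sum_(n <oo) (LpE_norm p (XI n) * LpEdual_norm (conj_exp p) (ETA n))%:E)%E.
Proof.
case=> inX inY soo cv.
have [e be] : exists e : nat -> nat * nat, set_bij setT setT e.
  by apply/card_set_bijP; apply: card_esym; exact: card_nat2.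
pose b n k := nrm (XI n k) * dnrm (ETA n k).
have b0 n k : 0 <= b n k.
  by rewrite mulr_ge0 ?nrm_ge0 // dnrm_ge0 //; exact: (proj1 (inY n) k).
have ble : (\sum_(n <oo) \sum_(k <oo) (b n k)%:E <=
   \sum_(n <oo) (LpE_norm p (XI n) * LpEdual_norm (conj_exp p) (ETA n))%:E)%E.
  apply: lee_nneseries => [n _ _|n _].
    by apply: nneseries_ge0 => k _ _; rewrite lee_fin.
  have H := @holder_seq R p _ _ p1 (fun k => @nrm_ge0 R _ (XI n k))
     (fun k => @dnrm_ge0 R E _ (proj1 (inY n) k)).
  apply: (le_trans H).
  apply: mul_fin; apply: lpnorm_fin.
  - by move=> k; exact: nrm_ge0.
  - exact: inX.
  - by move=> k; apply: dnrm_ge0; exact: (proj1 (inY n) k).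
  - exact: (proj2 (inY n)).
have boo := le_lt_trans ble soo.
exists (fun m => XI (e m).1 (e m).2), (fun m => ETA (e m).1 (e m).2).
have sE : (\sum_(m <oo) (nrm (XI (e m).1 (e m).2) * dnrm (ETA (e m).1 (e m).2))%:E =
   \sum_(n <oo) \sum_(k <oo) (b n k)%:E)%E.
  by apply: (@esum_reindex2 R (fun n k => (b n k)%:E) e be) => n k; rewrite lee_fin.
split; last by rewrite sE.
split => //.
- by move=> m; exact: (proj1 (inY _) _).
- by rewrite sE.
- move=> x.
  have bd n k : complex.Re `|ETA n k (pi x (XI n k))| <= b n k.
    have := @deta_bound R E _ (pi x (XI n k)) (proj1 (inY n) k).
    by rewrite /b mulrC {2}/nrm iso.
  have [_ H] := @c_core R _ _ _ be bd boo.
  exact: H (cv x).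
Qed.

End main.

Theorem proposition3 (R : realType) (G : topologicalType)
    (mul : G -> G -> G) (inv : G -> G) (one : G)
    (p : R) (E : completeNormedModType R[i]) (pi : G -> E -> E) :
  lc_group mul inv one -> 1 < p -> QSLp p E -> isom_rep mul pi ->
  A_pi pi = A_pi_inf pi p /\ (forall u, Anorm_pi pi u = Anorm_pi_inf pi p u).
Proof.
move=> _ p1 _ [_ iso _ _ _].
have emb := @embed R G E pi p p1.
have fl := @flatten R G E pi p iso p1.
split.
  apply/funext => u; apply/propext; split.
    case=> xi [eta h]; have [h2 _] := emb _ _ _ h.
    by exists (xi1 R E xi), (eta1 R E eta).
  case=> XI [ETA h]; have [xi [eta [h1 _]]] := fl _ _ _ h.
  by exists xi, eta.
move=> u; apply/le_anti/andP; split.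
  apply: le_ereal_inf_tmp => _ [XI [ETA [h ->]]].
  have [xi [eta [h1 hle]]] := fl _ _ _ h.
  apply: le_trans hle; apply: ereal_inf_lbound.
  by exists xi, eta; split.
apply: le_ereal_inf_tmp => _ [xi [eta [h ->]]].
have [h2 hs] := emb _ _ _ h; rewrite -hs; apply: ereal_inf_lbound.
by exists (xi1 R E xi), (eta1 R E eta); split.
Qed.
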